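(* Let $\mathbf W=(w_{ij})$ be row-stochastic and compatible with the strongly connected digraph $\mathcal G$ with parameter $\bar m$, and let $(i^k,\mathbf d^k)$ satisfy the asynchrony model with constants $T,D$. Let $\widehat{\mathbf W}^k\in\mathbb R^{(D+2)I\times(D+2)I}$ be the augmented matrices defined in the context. Then for all $k\in\mathbb N_0$: (a) $\widehat{\mathbf W}^k$ is row-stochastic; (b) all entries in the first $I$ columns of $\widehat{\mathbf W}^{k+K_1-1:k}$ are at least $\eta=\bar m^{K_1}$; (c) there exist a constant $C_2>0$ and a sequence of stochastic vectors $\{\boldsymbol\psi^k\}_{k\in\mathbb N_0}\subset\mathbb R^{(D+2)I}$ such that $\|\widehat{\mathbf W}^{k:t}-\mathbf 1\boldsymbol\psi^{t\top}\|\le C_2\rho^{k-t}$ for all $k\ge t\ge0$, with $\rho=(1-\bar m^{K_1})^{1/K_1}$, and $\psi_i^k\ge\eta$ for all $k$ and $i\in\{1,\dots,I\}$.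
   Context: $\mathcal G=(\mathcal V,\mathcal E)$, $\mathcal V=\{1,\dots,I\}$, strongly connected digraph without self-loops, $\mathcal N_i^{\rm in}=\{j:(j,i)\in\mathcal E\}$. Compatibility with parameter $\bar m\in(0,1)$: $w_{ii}\ge\bar m$, $w_{ij}\ge\bar m$ for $(j,i)\in\mathcal E$, $w_{ij}=0$ otherwise. Asynchrony model: $(i^k,\mathbf d^k)$, $i^k\in\mathcal V$, $\mathbf d^k=(d_j^k)_{j\in\mathcal N^{\rm in}_{i^k}}$, every agent appears among $i^k,\dots,i^{k+T-1}$ for all $k$, and $0\le d_j^k\le D$. $K_1=(2I-1)T+ID$. Augmented matrix $\widehat{\mathbf W}^k$ (rows/columns indexed $1,\dots,(D+2)I$): entry $(r,m)$ equals $w_{i^ki^k}$ if $r=m=i^k$; $w_{i^kj}$ if $r=i^k$ and $m=j+(d_j^k+1)I$ for $j\in\mathcal N^{\rm in}_{i^k}$; $1$ if $r=m\in\{1,\dots,2I\}\setminus\{i^k,i^k+I\}$; $1$ if $r\in\{2I+1,\dots,(D+2)I\}\cup\{i^k+I\}$ and $m=r-I$; $0$ otherwise. (This describes the update of the stacked vector $[\mathbf x^{k\top},\mathbf v^{k\top},\mathbf v^{k-1\top},\dots,\mathbf v^{k-D\top}]^\top$.) Products: $\widehat{\mathbf W}^{k:t}=\widehat{\mathbf W}^k\widehat{\mathbf W}^{k-1}\cdots\widehat{\mathbf W}^t$ for $k>t$, $=\widehat{\mathbf W}^t$ for $k=t$. $\|\cdot\|$ is the spectral norm. *)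

(* Defs.v *)
(* classical reals.  Agents are 0-indexed: V = {0,...,I-1}.
   Matrices/vectors are functions nat -> nat -> R / nat -> R, only the
   entries with indices below the relevant dimension are meaningful. *)
From Stdlib Require Import Reals Lra Lia Arith Relations.
Open Scope R_scope.

Fixpoint rsum (n : nat) (f : nat -> R) : R :=
  match n with
  | O => 0
  | S n' => rsum n' f + f n'
  end.

Definition row_stochastic (n : nat) (A : nat -> nat -> R) : Prop :=
  forall r, (r < n)%nat ->
    (forall m, (m < n)%nat -> 0 <= A r m) /\ rsum n (fun m => A r m) = 1.

Definition stochastic_vec (n : nat) (v : nat -> R) : Prop :=
  (forall m, (m < n)%nat -> 0 <= v m) /\ rsum n v = 1.

Definition matmul (n : nat) (A B : nat -> nat -> R) : nat -> nat -> R :=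
  fun r m => rsum n (fun l => A r l * B l m).

Definition matvec (n : nat) (A : nat -> nat -> R) (x : nat -> R) : nat -> R :=
  fun r => rsum n (fun m => A r m * x m).

Definition norm2 (n : nat) (x : nat -> R) : R :=
  sqrt (rsum n (fun i => x i ^ 2)).

(* ||A|| <= c for the spectral norm (operator norm induced by the
   Euclidean norm): ||A|| = sup_{x<>0} ||Ax||_2/||x||_2, so ||A|| <= c
   iff ||Ax||_2 <= c ||x||_2 for all x. *)
Definition spec_norm_le (n : nat) (A : nat -> nat -> R) (c : R) : Prop :=
  forall x : nat -> R, norm2 n (matvec n A x) <= c * norm2 n x.

(* Digraph on V = {0..I-1}: E j i = true means (j,i) is an edge j -> i. *)
Definition edge_rel (I : nat) (E : nat -> nat -> bool) : relation nat :=
  fun a b => (a < I)%nat /\ (b < I)%nat /\ E a b = true.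

Definition strongly_connected_digraph (I : nat) (E : nat -> nat -> bool) : Prop :=
  (forall i j, E i j = true -> (i < I)%nat /\ (j < I)%nat) /\
  (forall i, E i i = false) /\
  (forall i j, (i < I)%nat -> (j < I)%nat -> i <> j ->
     clos_trans nat (edge_rel I E) i j).

Definition compatible (I : nat) (E : nat -> nat -> bool) (W : nat -> nat -> R)
    (mbar : R) : Prop :=
  forall i j, (i < I)%nat -> (j < I)%nat ->
    (i = j -> mbar <= W i i) /\
    (E j i = true -> mbar <= W i j) /\
    (i <> j -> E j i = false -> W i j = 0).

(* asynchrony model: ik k is the active agent at iteration k, d k j the
   delay d_j^k of the information from in-neighbour j *)
Definition async_model (I : nat) (E : nat -> nat -> bool) (T D : nat)
    (ik : nat -> nat) (d : nat -> nat -> nat) : Prop :=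
  (forall k, (ik k < I)%nat) /\
  (forall k i, (i < I)%nat -> exists s, (k <= s)%nat /\ (s < k + T)%nat /\ ik s = i) /\
  (forall k j, E j (ik k) = true -> (d k j <= D)%nat).

(* The augmented matrix \hat W^k (0-indexed version of the paper's
   definition; rows/columns 0..(D+2)I-1). *)
Definition What (I D : nat) (E : nat -> nat -> bool) (W : nat -> nat -> R)
    (ik : nat -> nat) (d : nat -> nat -> nat) (k : nat) : nat -> nat -> R :=
  fun r m =>
    let i := ik k in
    if Nat.eqb r i then
      (if Nat.eqb m i then W i i else 0)
      + rsum I (fun j => if andb (E j i) (Nat.eqb m (j + (d k j + 1) * I))
                         then W i j else 0)
    else if andb (Nat.ltb r (2 * I)) (negb (Nat.eqb r (i + I))) then
      (if Nat.eqb m r then 1 else 0)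
    else if andb (orb (andb (Nat.leb (2 * I) r) (Nat.ltb r ((D + 2) * I)))
                      (Nat.eqb r (i + I)))
                 (Nat.eqb m (r - I)) then 1
    else 0.

(* WhatProd t n = \hat W^{t+n:t} = \hat W^{t+n} ... \hat W^{t} *)
Fixpoint WhatProd (I D : nat) (E : nat -> nat -> bool) (W : nat -> nat -> R)
    (ik : nat -> nat) (d : nat -> nat -> nat) (t n : nat) : nat -> nat -> R :=
  match n with
  | O => What I D E W ik d t
  | S n' => matmul ((D + 2) * I) (What I D E W ik d (t + S n'))
                   (WhatProd I D E W ik d t n')
  end.

(* Main.v *)
Require Import Defs.
From Stdlib Require Import Reals Lra Lia Arith Relations List Classical.
Open Scope R_scope.

Lemma rsum_ext n f g : (forall i, (i<n)%nat -> f i = g i) -> rsum n f = rsum n g.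
Proof. induction n; simpl; intros H; [reflexivity|]. rewrite IHn by (intros; apply H; lia). rewrite H by lia. reflexivity. Qed.

Lemma rsum_plus n f g : rsum n (fun i => f i + g i) = rsum n f + rsum n g.
Proof. induction n; simpl; [lra|]. rewrite IHn. lra. Qed.

Lemma rsum_minus n f g : rsum n (fun i => f i - g i) = rsum n f - rsum n g.
Proof. induction n; simpl; [lra|]. rewrite IHn. lra. Qed.

Lemma rsum_scal_l n c f : rsum n (fun i => c * f i) = c * rsum n f.
Proof. induction n; simpl; [lra|]. rewrite IHn. lra. Qed.

Lemma rsum_scal_r n c f : rsum n (fun i => f i * c) = rsum n f * c.
Proof. induction n; simpl; [lra|]. rewrite IHn. lra. Qed.

Lemma rsum_const n c : rsum n (fun _ => c) = INR n * c.
Proof. induction n; simpl rsum; [simpl; lra|]. rewrite IHn, S_INR. lra. Qed.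

Lemma rsum_le n f g : (forall i, (i<n)%nat -> f i <= g i) -> rsum n f <= rsum n g.
Proof. induction n; simpl; intros H; [lra|]. assert (f n <= g n) by (apply H; lia).
 assert (rsum n f <= rsum n g) by (apply IHn; intros; apply H; lia). lra. Qed.

Lemma rsum_nonneg n f : (forall i, (i<n)%nat -> 0 <= f i) -> 0 <= rsum n f.
Proof. intros H. apply Rle_trans with (rsum n (fun _ => 0)).
 rewrite rsum_const; lra. apply rsum_le; auto. Qed.

Lemma rsum_term n f l : (forall i, (i<n)%nat -> 0 <= f i) -> (l<n)%nat -> f l <= rsum n f.
Proof. induction n; simpl; intros H Hl; [lia|].
 destruct (Nat.eq_dec l n). subst. assert (0 <= rsum n f) by (apply rsum_nonneg; intros; apply H; lia). lra.
 assert (f l <= rsum n f) by (apply IHn; [intros; apply H|]; lia). assert (0 <= f n) by (apply H; lia). lra. Qed.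

Lemma rsum_swap n p F : rsum n (fun i => rsum p (fun j => F i j)) = rsum p (fun j => rsum n (fun i => F i j)).
Proof. induction n; simpl. { rewrite rsum_const. lra. }
 rewrite IHn, <- rsum_plus. reflexivity. Qed.

Lemma rsum_ind n c a : rsum n (fun m => if Nat.eqb m c then a else 0) = if Nat.ltb c n then a else 0.
Proof. induction n; simpl. destruct (Nat.ltb_spec c 0); [lia|lra].
 rewrite IHn. destruct (Nat.ltb_spec c n), (Nat.ltb_spec c (S n)), (Nat.eqb_spec n c); subst; try lia; lra. Qed.

Lemma rsum_abs n f : Rabs (rsum n f) <= rsum n (fun i => Rabs (f i)).
Proof. induction n; simpl. rewrite Rabs_R0; lra. eapply Rle_trans; [apply Rabs_triang|]. lra. Qed.

Fixpoint rmax (n:nat) (f:nat->R) : R := match n with O => f O | S n' => Rmax (rmax n' f) (f n') end.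
Lemma rmax_ge n f l : (l < n)%nat -> f l <= rmax n f.
Proof. induction n; intros Hl; [lia|]. simpl. destruct (Nat.eq_dec l n). subst; apply Rmax_r.
 eapply Rle_trans; [apply IHn; lia| apply Rmax_l]. Qed.
Lemma rmax_le n f c : (forall l, (l<n)%nat -> f l <= c) -> (1 <= n)%nat -> rmax n f <= c.
Proof. induction n; intros H Hn; [lia|]. simpl. destruct n. simpl. apply Rmax_lub; apply H; lia.
 apply Rmax_lub; [apply IHn; [intros; apply H|]|apply H]; lia. Qed.
Definition rmin n (f:nat->R) := - rmax n (fun l => - f l).
Lemma rmin_le n f l : (l < n)%nat -> rmin n f <= f l.
Proof. intros. unfold rmin. pose proof (rmax_ge n (fun l => - f l) l H). simpl in H0. lra. Qed.
Lemma rmin_ge n f c : (forall l, (l<n)%nat -> c <= f l) -> (1 <= n)%nat -> c <= rmin n f.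
Proof. intros H Hn. unfold rmin. assert (rmax n (fun l => - f l) <= - c). apply rmax_le; auto.
 intros l Hl; specialize (H l Hl); lra. lra. Qed.

Fixpoint Prod (N:nat) (A : nat -> nat -> nat -> R) (t n : nat) : nat -> nat -> R :=
  match n with O => A t | S n' => matmul N (A (t + S n')%nat) (Prod N A t n') end.

Lemma matmul_assoc N A B C r m : matmul N A (matmul N B C) r m = matmul N (matmul N A B) C r m.
Proof. unfold matmul.
 transitivity (rsum N (fun l => rsum N (fun p => A r l * B l p * C p m))).
 apply rsum_ext; intros. rewrite <- rsum_scal_l. apply rsum_ext; intros; ring.
 rewrite rsum_swap. apply rsum_ext; intros. rewrite <- rsum_scal_r. reflexivity. Qed.

Lemma prod_split N A t n k r m :
  Prod N A t (n + S k) r m = matmul N (Prod N A (t+n+1) k) (Prod N A t n) r m.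
Proof. revert r m. induction k; intros r m.
 - replace (n+1)%nat with (S n) by lia. simpl. replace (t + S n)%nat with (t+n+1)%nat by lia. reflexivity.
 - rewrite Nat.add_succ_r. simpl Prod at 1. unfold matmul at 1.
   rewrite (rsum_ext _ _ (fun l => A (t + S (n + S k))%nat r l * matmul N (Prod N A (t + n + 1) k) (Prod N A t n) l m)).
   2:{ intros; rewrite IHk; reflexivity. }
   fold (matmul N (A (t + S (n + S k))%nat) (matmul N (Prod N A (t + n + 1) k) (Prod N A t n)) r m).
   rewrite matmul_assoc. simpl Prod. replace (t + n + 1 + S k)%nat with (t + S (n + S k))%nat by lia.
   reflexivity. Qed.

Section G.
End G.

Lemma prod_nonneg N A (HA : forall t, row_stochastic N (A t)) t n r m :
  (r<N)%nat -> (m<N)%nat -> 0 <= Prod N A t n r m.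
Proof. revert r m; induction n; intros r m Hr Hm; simpl.
 apply (HA t r Hr); auto.
 unfold matmul. apply rsum_nonneg. intros l Hl. apply Rmult_le_pos. apply (HA _ r Hr); auto. auto. Qed.

Lemma prod_rowsum N A (HA : forall t, row_stochastic N (A t)) t n r :
  (r<N)%nat -> rsum N (fun m => Prod N A t n r m) = 1.
Proof. revert r; induction n; intros r Hr; simpl.
 apply (HA t r Hr). unfold matmul. rewrite rsum_swap.
 rewrite (rsum_ext _ _ (fun l => A (t + S n)%nat r l * 1)).
 rewrite rsum_scal_r. rewrite Rmult_1_r. apply (HA _ r Hr).
 intros l Hl. rewrite rsum_scal_l. rewrite IHn; auto. Qed.

Lemma prod_le1 N A (HA : forall t, row_stochastic N (A t)) t n r m :
  (r<N)%nat -> (m<N)%nat -> Prod N A t n r m <= 1.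
Proof. intros Hr Hm. rewrite <- (prod_rowsum N A HA t n r Hr).
 apply (rsum_term N (fun m => Prod N A t n r m)); auto. intros; apply prod_nonneg; auto. Qed.

Lemma conv_le N (a : nat -> R) (p : nat -> R) hi :
  (forall l, (l<N)%nat -> 0 <= a l) -> rsum N a = 1 -> (forall l, (l<N)%nat -> p l <= hi) ->
  rsum N (fun l => a l * p l) <= hi.
Proof. intros Ha Hs Hp. apply Rle_trans with (rsum N (fun l => a l * hi)).
 apply rsum_le; intros. apply Rmult_le_compat_l; auto. rewrite rsum_scal_r, Hs; lra. Qed.
Lemma conv_ge N (a : nat -> R) (p : nat -> R) lo :
  (forall l, (l<N)%nat -> 0 <= a l) -> rsum N a = 1 -> (forall l, (l<N)%nat -> lo <= p l) ->
  lo <= rsum N (fun l => a l * p l).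
Proof. intros Ha Hs Hp. apply Rle_trans with (rsum N (fun l => a l * lo)).
 rewrite rsum_scal_r, Hs; lra. apply rsum_le; intros. apply Rmult_le_compat_l; auto. Qed.

Lemma contr_le N (a : nat -> R) (p : nat -> R) hi eta :
  (0 < N)%nat -> (forall l, (l<N)%nat -> 0 <= a l) -> rsum N a = 1 -> (forall l, (l<N)%nat -> p l <= hi) ->
  eta <= a O -> rsum N (fun l => a l * p l) <= hi - eta * (hi - p O).
Proof. intros HN Ha Hs Hp He.
 assert (rsum N (fun l => a l * p l) = rsum N (fun l => a l * hi) - rsum N (fun l => a l * (hi - p l))).
 { rewrite <- rsum_minus. apply rsum_ext; intros; ring. }
 rewrite H, rsum_scal_r, Hs.
 assert (a O * (hi - p O) <= rsum N (fun l => a l * (hi - p l))).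
 { apply (rsum_term N (fun l => a l * (hi - p l))); auto. intros. apply Rmult_le_pos; auto. specialize (Hp i H0); lra. }
 assert (eta * (hi - p O) <= a O * (hi - p O)). apply Rmult_le_compat_r; auto. specialize (Hp O HN); lra.
 lra. Qed.
Lemma contr_ge N (a : nat -> R) (p : nat -> R) lo eta :
  (0 < N)%nat -> (forall l, (l<N)%nat -> 0 <= a l) -> rsum N a = 1 -> (forall l, (l<N)%nat -> lo <= p l) ->
  eta <= a O -> lo + eta * (p O - lo) <= rsum N (fun l => a l * p l).
Proof. intros HN Ha Hs Hp He.
 assert (rsum N (fun l => a l * p l) = rsum N (fun l => a l * lo) + rsum N (fun l => a l * (p l - lo))).
 { rewrite <- rsum_plus. apply rsum_ext; intros; ring. }
 rewrite H, rsum_scal_r, Hs.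
 assert (a O * (p O - lo) <= rsum N (fun l => a l * (p l - lo))).
 { apply (rsum_term N (fun l => a l * (p l - lo))); auto. intros. apply Rmult_le_pos; auto. specialize (Hp i H0); lra. }
 assert (eta * (p O - lo) <= a O * (p O - lo)). apply Rmult_le_compat_r; auto. specialize (Hp O HN); lra.
 lra. Qed.

Definition Mx N A t n m := rmax N (fun r => Prod N A t n r m).
Definition Mn N A t n m := rmin N (fun r => Prod N A t n r m).

Section S.
Context (N : nat) (A : nat -> nat -> nat -> R) (HA : forall t, row_stochastic N (A t)) (HN : (1 <= N)%nat).

Lemma Mx_ge t n r m : (r<N)%nat -> Prod N A t n r m <= Mx N A t n m.
Proof. intros; unfold Mx; apply (rmax_ge _ (fun r => Prod N A t n r m)); auto. Qed.
Lemma Mn_le t n r m : (r<N)%nat -> Mn N A t n m <= Prod N A t n r m.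
Proof. intros; unfold Mn; apply (rmin_le _ (fun r => Prod N A t n r m)); auto. Qed.

Lemma Mx_step t n m : Mx N A t (S n) m <= Mx N A t n m.
Proof. unfold Mx at 1. apply rmax_le; auto. intros r Hr. simpl. unfold matmul.
 apply conv_le. intros; apply (HA _ r Hr); auto. apply (HA _ r Hr). intros; apply Mx_ge; auto. Qed.
Lemma Mn_step t n m : Mn N A t n m <= Mn N A t (S n) m.
Proof. unfold Mn at 2. apply rmin_ge; auto. intros r Hr. simpl. unfold matmul.
 apply conv_ge. intros; apply (HA _ r Hr); auto. apply (HA _ r Hr). intros; apply Mn_le; auto. Qed.

Lemma Mx_mono t n n' m : (n <= n')%nat -> Mx N A t n' m <= Mx N A t n m.
Proof. induction 1. lra. pose proof (Mx_step t m0 m); lra. Qed.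
Lemma Mn_mono t n n' m : (n <= n')%nat -> Mn N A t n m <= Mn N A t n' m.
Proof. induction 1. lra. pose proof (Mn_step t m0 m); lra. Qed.

Lemma Mn_Mx t n m : Mn N A t n m <= Mx N A t n m.
Proof. apply Rle_trans with (Prod N A t n O m). apply Mn_le; lia. apply Mx_ge; lia. Qed.

Lemma Mn_nonneg t n m : (m<N)%nat -> 0 <= Mn N A t n m.
Proof. intros. unfold Mn. apply rmin_ge; auto. intros; apply prod_nonneg; auto. Qed.
Lemma Mx_le1 t n m : (m<N)%nat -> Mx N A t n m <= 1.
Proof. intros. unfold Mx. apply rmax_le; auto. intros; apply prod_le1; auto. Qed.

Context (k : nat) (eta : R) (Heta : 0 <= eta <= 1)
  (Hcol : forall t r, (r<N)%nat -> eta <= Prod N A t k r O).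

Lemma contraction t n m :
  Mx N A t (n + S k) m - Mn N A t (n + S k) m <= (1 - eta) * (Mx N A t n m - Mn N A t n m).
Proof.
 set (hi := Mx N A t n m). set (lo := Mn N A t n m). set (p0 := Prod N A t n O m).
 assert (H1 : Mx N A t (n + S k) m <= hi - eta * (hi - p0)).
 { unfold Mx at 1. apply rmax_le; auto. intros r Hr. rewrite prod_split. unfold matmul.
   apply contr_le; auto. intros; apply prod_nonneg; auto. apply prod_rowsum; auto.
   intros; apply Mx_ge; auto. }
 assert (H2 : lo + eta * (p0 - lo) <= Mn N A t (n + S k) m).
 { unfold Mn at 1. apply rmin_ge; auto. intros r Hr. rewrite prod_split. unfold matmul.
   apply (contr_ge N _ (fun l => Prod N A t n l m)); auto. intros; apply prod_nonneg; auto. apply prod_rowsum; auto.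
   intros; apply Mn_le; auto. }
 lra. Qed.

Lemma diam t q s m : (m<N)%nat ->
  Mx N A t (q * S k + s) m - Mn N A t (q * S k + s) m <= (1 - eta) ^ q.
Proof. intros Hm. induction q.
 - simpl. pose proof (Mx_le1 t s m Hm). pose proof (Mn_nonneg t s m Hm). lra.
 - replace (S q * S k + s)%nat with ((q * S k + s) + S k)%nat by lia.
   eapply Rle_trans. apply contraction. simpl. apply Rmult_le_compat_l; lra. Qed.


Lemma small_zero x c a : 0 <= c -> 0 <= a < 1 -> (forall q, Rabs x <= c * a ^ q) -> x = 0.
Proof. intros Hc Ha H. destruct (Req_dec x 0); auto. exfalso.
 assert (Hx : 0 < Rabs x) by (apply Rabs_pos_lt; auto).
 destruct (Req_dec c 0). subst. specialize (H O). lra.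
 destruct (pow_lt_1_zero a) with (y := Rabs x / c) as [q Hq].
 rewrite Rabs_right; lra. apply Rdiv_lt_0_compat; lra.
 specialize (Hq q (le_n q)). specialize (H q). rewrite Rabs_right in Hq by (apply Rle_ge, pow_le; lra).
 assert (c * a ^ q < Rabs x). { apply Rmult_lt_compat_l with (r := c) in Hq; [|lra].
   replace (c * (Rabs x / c)) with (Rabs x) in Hq by (field; lra). lra. }
 lra. Qed.

Lemma psi_exists : 0 < eta ->
  exists psi : nat -> nat -> R,
   (forall t, stochastic_vec N (psi t)) /\
   (forall t n r m, (r<N)%nat -> (m<N)%nat -> Rabs (Prod N A t n r m - psi t m) <= (1-eta)^(n / S k)) /\
   (forall t n m, (m<N)%nat -> Mn N A t n m <= psi t m).
Proof. intros Hpos.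
 assert (Hl : forall t m, {l | is_lub (fun x => exists n, x = Mn N A t n m) l}).
 { intros t m. apply completeness. exists (Mx N A t O m). intros x [n ->].
   pose proof (Mn_Mx t n m). pose proof (Mx_mono t O n m (Nat.le_0_l n)). lra.
   exists (Mn N A t O m). exists O; auto. }
 set (psi := fun t m => proj1_sig (Hl t m)).
 assert (Hge : forall t n m, Mn N A t n m <= psi t m).
 { intros t n m. unfold psi. destruct (Hl t m) as [l [Hu Hb]]. simpl. apply Hu. exists n; auto. }
 assert (Hle : forall t n m, psi t m <= Mx N A t n m).
 { intros t n m. unfold psi. destruct (Hl t m) as [l [Hu Hb]]. simpl. apply Hb. intros x [n' ->].
   pose proof (Mn_mono t n' (Nat.max n n') m (Nat.le_max_r _ _)).
   pose proof (Mn_Mx t (Nat.max n n') m).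
   pose proof (Mx_mono t n (Nat.max n n') m (Nat.le_max_l _ _)). lra. }
 assert (Hb : forall t n r m, (r<N)%nat -> (m<N)%nat -> Rabs (Prod N A t n r m - psi t m) <= (1-eta)^(n / S k)).
 { intros t n r m Hr Hm.
   assert (Hn: n = (n / S k * S k + n mod S k)%nat) by (rewrite Nat.mul_comm; apply Nat.div_mod_eq).
   rewrite Hn at 1.
   pose proof (diam t (n / S k) (n mod S k) m Hm).
   pose proof (Hge t (n / S k * S k + n mod S k)%nat m). pose proof (Hle t (n / S k * S k + n mod S k)%nat m).
   pose proof (Mx_ge t (n / S k * S k + n mod S k)%nat r m Hr).
   pose proof (Mn_le t (n / S k * S k + n mod S k)%nat r m Hr).
   apply Rabs_le. lra. }
 exists psi. split; [|split]; auto.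
 intros t. split.
 - intros m Hm. pose proof (Hge t O m). pose proof (Mn_nonneg t O m Hm). lra.
 - apply Rminus_diag_uniq. apply (small_zero _ (INR N) (1 - eta)). apply pos_INR. lra.
   intros q. rewrite <- (prod_rowsum N A HA t (q * S k) O) at 1 by lia. rewrite <- rsum_minus.
   eapply Rle_trans. apply rsum_abs. rewrite <- rsum_const. apply rsum_le. intros m Hm.
   rewrite Rabs_minus_sym. specialize (Hb t (q * S k)%nat O m ltac:(lia) Hm).
   rewrite Nat.div_mul in Hb by lia. exact Hb.
Qed.

End S.

Lemma norm_bound N (B : nat -> nat -> R) e : (1 <= N)%nat -> 0 <= e ->
  (forall r m, (r<N)%nat -> (m<N)%nat -> Rabs (B r m) <= e) -> spec_norm_le N B (INR N * INR N * e).
Proof. intros HN He HB x. unfold norm2, matvec.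
 set (S := rsum N (fun i => x i ^ 2)). set (X := sqrt S).
 assert (HS : 0 <= S) by (apply rsum_nonneg; intros; apply pow2_ge_0).
 assert (HX : 0 <= X) by apply sqrt_pos.
 assert (HxX : forall m, (m<N)%nat -> Rabs (x m) <= X).
 { intros m Hm. rewrite <- (sqrt_pow2 (Rabs (x m))) by apply Rabs_pos. rewrite pow2_abs.
   apply sqrt_le_1_alt. apply (rsum_term N (fun i => x i ^ 2)); auto. intros; apply pow2_ge_0. }
 assert (HNr : 1 <= INR N) by (apply (le_INR 1); auto).
 assert (Hrow : forall r, (r<N)%nat -> Rabs (rsum N (fun m => B r m * x m)) <= INR N * e * X).
 { intros r Hr. eapply Rle_trans. apply rsum_abs. rewrite Rmult_assoc, <- rsum_const. apply rsum_le.
   intros m Hm. rewrite Rabs_mult. apply Rmult_le_compat; auto using Rabs_pos. }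
 assert (Hsq : rsum N (fun r => rsum N (fun m => B r m * x m) ^ 2) <= INR N * (INR N * e * X) ^ 2).
 { rewrite <- rsum_const. apply rsum_le. intros r Hr. rewrite <- pow2_abs. apply pow_incr.
   split; [apply Rabs_pos| auto]. }
 assert (H0 : 0 <= INR N * INR N * e * X) by (repeat apply Rmult_le_pos; lra).
 rewrite <- (sqrt_pow2 (INR N * INR N * e * X)) by auto.
 apply sqrt_le_1_alt. eapply Rle_trans. apply Hsq.
 assert (0 <= (INR N * e * X) ^ 2) by apply pow2_ge_0.
 replace ((INR N * INR N * e * X) ^ 2) with (INR N * INR N * (INR N * e * X) ^ 2) by ring.
 nra. Qed.

Lemma pow_le1 r n : 0 <= r <= 1 -> r ^ n <= 1.
Proof. intros. rewrite <- (pow1 n). apply pow_incr. lra. Qed.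

Lemma pow_anti r a b : 0 <= r <= 1 -> (a <= b)%nat -> r ^ b <= r ^ a.
Proof. intros Hr Hab. replace b with (a + (b - a))%nat by lia. rewrite pow_add.
 pose proof (pow_le1 r (b - a) Hr). pose proof (pow_le r a (proj1 Hr)). nra. Qed.

Lemma rho_facts eta K : 0 < eta < 1 -> (1 <= K)%nat ->
  let rho := Rpower (1 - eta) (1 / INR K) in
  0 < rho /\ forall n, (1 - eta) ^ (n / K) <= rho ^ n / (1 - eta).
Proof. intros He HK rho.
 assert (Hp : 0 < rho) by (unfold rho, Rpower; apply exp_pos).
 assert (HK' : INR K <> 0) by (apply not_0_INR; lia).
 assert (HrK : rho ^ K = 1 - eta).
 { rewrite <- Rpower_pow by auto. unfold rho. rewrite Rpower_mult.
   replace (1 / INR K * INR K) with 1 by (field; auto). apply Rpower_1. lra. }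
 assert (Hr1 : rho <= 1).
 { destruct (Rle_lt_dec rho 1); auto. pose proof (Rlt_pow_R1 rho K r ltac:(lia)). lra. }
 split; auto. intros n.
 apply Rmult_le_reg_r with (1 - eta). lra.
 unfold Rdiv. rewrite Rmult_assoc, Rinv_l, Rmult_1_r by lra.
 rewrite <- HrK at 1 2. rewrite <- pow_mult, <- pow_add.
 apply pow_anti. lra.
 pose proof (Nat.div_mod_eq n K). pose proof (Nat.mod_upper_bound n K ltac:(lia)). nia.
Qed.

Section Wh.
Context (I : nat) (E : nat -> nat -> bool) (W : nat -> nat -> R) (mbar : R) (T D : nat)
  (ik : nat -> nat) (d : nat -> nat -> nat)
  (HI : (1 <= I)%nat) (Hsc : strongly_connected_digraph I E) (HW : row_stochastic I W)
  (Hm : 0 < mbar < 1) (Hc : compatible I E W mbar) (Has : async_model I E T D ik d).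

Definition Wh := What I D E W ik d.

Lemma ik_lt k : (ik k < I)%nat.
Proof. apply Has. Qed.

Lemma What_act k m : Wh k (ik k) m = (if Nat.eqb m (ik k) then W (ik k) (ik k) else 0) +
  rsum I (fun j => if andb (E j (ik k)) (Nat.eqb m (j + (d k j + 1) * I)) then W (ik k) j else 0).
Proof. unfold Wh, What. rewrite Nat.eqb_refl. reflexivity. Qed.

Lemma What_nact k r m : r <> ik k -> Wh k r m =
   if andb (Nat.ltb r (2 * I)) (negb (Nat.eqb r (ik k + I))) then
      (if Nat.eqb m r then 1 else 0)
    else if andb (orb (andb (Nat.leb (2 * I) r) (Nat.ltb r ((D + 2) * I)))
                      (Nat.eqb r (ik k + I)))
                 (Nat.eqb m (r - I)) then 1
    else 0.
Proof. intros H. unfold Wh, What. destruct (Nat.eqb_spec r (ik k)); [contradiction|reflexivity]. Qed.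

Lemma W_nonneg i j : (i < I)%nat -> (j < I)%nat -> 0 <= W i j.
Proof. intros; apply HW; auto. Qed.

Lemma What_nonneg k r m : 0 <= Wh k r m.
Proof. pose proof (ik_lt k). destruct (Nat.eq_dec r (ik k)).
 - subst. rewrite What_act. apply Rplus_le_le_0_compat.
   destruct (Nat.eqb m (ik k)); [apply W_nonneg; auto|lra].
   apply rsum_nonneg. intros j Hj. destruct andb; [apply W_nonneg; auto|lra].
 - rewrite What_nact by auto. repeat match goal with |- context [if ?b then _ else _] => destruct b end; lra.
Qed.

Lemma W_split i : (i < I)%nat -> forall j, (j < I)%nat ->
  W i j = (if Nat.eqb j i then W i i else 0) + (if E j i then W i j else 0).
Proof. intros Hi j Hj. destruct (Nat.eqb_spec j i).
 - subst. destruct Hsc as [_ [Hnl _]]. rewrite Hnl. lra.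
 - destruct (E j i) eqn:Ee. lra. destruct (Hc i j Hi Hj) as [_ [_ H3]]. rewrite H3; auto. lra. Qed.

Lemma What_rs k : row_stochastic ((D + 2) * I) (Wh k).
Proof. intros r Hr. split. intros; apply What_nonneg. pose proof (ik_lt k) as Hik.
 destruct (Nat.eq_dec r (ik k)).
 - subst r. rewrite (rsum_ext _ _ (fun m => (if Nat.eqb m (ik k) then W (ik k) (ik k) else 0) +
     rsum I (fun j => if andb (E j (ik k)) (Nat.eqb m (j + (d k j + 1) * I)) then W (ik k) j else 0))).
   2:{ intros; apply What_act. }
   rewrite rsum_plus, rsum_ind, rsum_swap.
   destruct (Nat.ltb_spec (ik k) ((D+2)*I)); [|lia].
   rewrite (rsum_ext I _ (fun j => if E j (ik k) then W (ik k) j else 0)).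
   2:{ intros j Hj. destruct (E j (ik k)) eqn:Ee.
       - simpl. rewrite rsum_ind. destruct (Nat.ltb_spec (j + (d k j + 1) * I) ((D + 2) * I)); auto.
         exfalso. destruct Has as [_ [_ Hd]]. specialize (Hd k j Ee). nia.
       - simpl. rewrite rsum_const. lra. }
   destruct (HW (ik k) Hik) as [_ Hs]. rewrite <- Hs. rewrite (rsum_ext I (fun m => W (ik k) m) _ (W_split (ik k) Hik)).
   rewrite rsum_plus, rsum_ind.
   destruct (Nat.ltb_spec (ik k) I); [|lia]. reflexivity.
 - rewrite (rsum_ext _ _ _ (fun m _ => What_nact k r m n)).
   destruct (andb (Nat.ltb r (2 * I)) (negb (Nat.eqb r (ik k + I)))) eqn:H1.
   + rewrite rsum_ind. destruct (Nat.ltb_spec r ((D+2)*I)); [reflexivity|lia].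
   + assert (HB : orb (andb (Nat.leb (2 * I) r) (Nat.ltb r ((D + 2) * I))) (Nat.eqb r (ik k + I)) = true).
     { destruct (Nat.eqb_spec r (ik k + I)). apply Bool.orb_true_r.
       destruct (Nat.ltb_spec r (2 * I)); simpl in H1; try discriminate.
       destruct (Nat.leb_spec (2*I) r); [|lia]. destruct (Nat.ltb_spec r ((D+2)*I)); [|lia]. reflexivity. }
     rewrite HB. simpl andb. rewrite rsum_ind. destruct (Nat.ltb_spec (r - I) ((D+2)*I)); [reflexivity|lia].
Qed.

Lemma What_diag_act k : mbar <= Wh k (ik k) (ik k).
Proof. pose proof (ik_lt k). rewrite What_act, Nat.eqb_refl.
 assert (0 <= rsum I (fun j => if andb (E j (ik k)) (Nat.eqb (ik k) (j + (d k j + 1) * I)) then W (ik k) j else 0)).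
 { apply rsum_nonneg; intros; destruct andb; [apply W_nonneg; auto|lra]. }
 destruct (Hc (ik k) (ik k) H H) as [H1 _]. specialize (H1 eq_refl). lra. Qed.

Lemma What_nbr k j : (j < I)%nat -> E j (ik k) = true -> mbar <= Wh k (ik k) (j + (d k j + 1) * I).
Proof. intros Hj Ee. pose proof (ik_lt k). rewrite What_act.
 destruct (Nat.eqb_spec (j + (d k j + 1) * I) (ik k)). nia.
 set (f := fun j0 => if andb (E j0 (ik k)) (Nat.eqb (j + (d k j + 1) * I) (j0 + (d k j0 + 1) * I)) then W (ik k) j0 else 0).
 assert (f j <= rsum I f). { apply rsum_term; auto. intros; unfold f; destruct andb; [apply W_nonneg; auto|lra]. }
 unfold f at 1 in H0. rewrite Ee, Nat.eqb_refl in H0. simpl in H0.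
 destruct (Hc (ik k) j H Hj) as [_ [H2 _]]. specialize (H2 Ee). lra. Qed.

Lemma What_x_id k r : (r < I)%nat -> r <> ik k -> Wh k r r = 1.
Proof. intros. rewrite What_nact by auto. destruct (Nat.ltb_spec r (2*I)); [|lia].
 destruct (Nat.eqb_spec r (ik k + I)); [lia|]. simpl. rewrite Nat.eqb_refl. reflexivity. Qed.

Lemma What_v_id k j : (j < I)%nat -> j <> ik k -> Wh k (j + I) (j + I) = 1.
Proof. intros. pose proof (ik_lt k). rewrite What_nact by lia. destruct (Nat.ltb_spec (j + I) (2*I)); [|lia].
 destruct (Nat.eqb_spec (j + I) (ik k + I)); [lia|]. simpl. rewrite Nat.eqb_refl. reflexivity. Qed.

Lemma What_v_act k : Wh k (ik k + I) (ik k) = 1.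
Proof. pose proof (ik_lt k). rewrite What_nact by lia. rewrite Nat.eqb_refl, Bool.andb_false_r, Bool.orb_true_r.
 replace (ik k + I - I)%nat with (ik k) by lia. rewrite Nat.eqb_refl. reflexivity. Qed.

Lemma What_buf k r : (2 * I <= r)%nat -> (r < (D + 2) * I)%nat -> Wh k r (r - I) = 1.
Proof. intros. pose proof (ik_lt k). rewrite What_nact by lia.
 destruct (Nat.ltb_spec r (2*I)); [lia|]. simpl andb at 1.
 destruct (Nat.leb_spec (2*I) r); [|lia]. destruct (Nat.ltb_spec r ((D+2)*I)); [|lia].
 rewrite Nat.eqb_refl. reflexivity. Qed.

Lemma WP_nonneg t n r m : 0 <= WhatProd I D E W ik d t n r m.
Proof. revert r m; induction n; intros; simpl. apply What_nonneg.
 unfold matmul. apply rsum_nonneg. intros. apply Rmult_le_pos; auto. apply What_nonneg. Qed.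

Definition G t m s r := match s with O => r = m | S s' => mbar ^ s <= WhatProd I D E W ik d t s' r m end.
Definition GF t m s0 r := forall s, (s0 <= s)%nat -> G t m s r.

Lemma G_step t m s l r : G t m s l -> (l < (D + 2) * I)%nat -> mbar <= Wh (t + s) r l -> G t m (S s) r.
Proof. intros Hg Hl Hw. destruct s as [|s'].
 - simpl in Hg. subst l. simpl. rewrite Nat.add_0_r in Hw. unfold Wh in Hw. lra.
 - simpl in Hg |- *. unfold matmul.
   pose (f := fun l0 => What I D E W ik d (t + S s') r l0 * WhatProd I D E W ik d t s' l0 m).
   assert (f l <= rsum ((D+2)*I) f). { apply rsum_term; auto. intros; unfold f; apply Rmult_le_pos; [apply What_nonneg|apply WP_nonneg]. }
   unfold f in H. unfold Wh in Hw.
   assert (0 <= mbar * (mbar * mbar ^ s')) by (apply Rmult_le_pos; [lra|]; apply Rmult_le_pos; [lra|apply pow_le; lra]).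
   assert (mbar * (mbar * mbar ^ s') <= What I D E W ik d (t + S s') r l * WhatProd I D E W ik d t s' l m).
   { apply Rmult_le_compat; [lra | apply Rmult_le_pos;[lra|apply pow_le;lra] | lra | exact Hg]. }
   unfold f in H. simpl pow. lra. Qed.

Lemma nat_ind_from (P : nat -> Prop) s1 : P s1 -> (forall s, (s1 <= s)%nat -> P s -> P (S s)) ->
  forall s, (s1 <= s)%nat -> P s.
Proof. intros H0 HS s Hs. induction Hs; auto. Qed.

Lemma GF_mono t m s0 s1 r : GF t m s0 r -> (s0 <= s1)%nat -> GF t m s1 r.
Proof. intros H Hle s Hs. apply H. lia. Qed.

Lemma IN : (I <= (D + 2) * I)%nat. Proof. nia. Qed.

Lemma x_persist t m i s0 : (i < I)%nat -> G t m s0 i -> GF t m s0 i.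
Proof. intros Hi Hg. unfold GF. apply (nat_ind_from (fun s => G t m s i) s0); auto. intros s _ Hs. apply (G_step _ _ _ i); auto.
 pose proof IN; lia. destruct (Nat.eq_dec i (ik (t + s))). subst i. apply What_diag_act.
 rewrite What_x_id; auto; lra. Qed.

Lemma F2 t m j s0 : (j < I)%nat -> GF t m s0 j -> exists s1, (s1 <= s0 + T)%nat /\ GF t m s1 (j + I).
Proof. intros Hj Hgf. destruct Has as [_ [Hact _]]. destruct (Hact (t + s0)%nat j Hj) as [a [Ha1 [Ha2 Ha3]]].
 exists (S (a - t)). split. lia.
 unfold GF. apply (nat_ind_from (fun s => G t m s (j + I)) (S (a - t))).
 - apply (G_step _ _ _ j). apply Hgf; lia. pose proof IN; lia.
   replace (t + (a - t))%nat with a by lia. rewrite <- Ha3, What_v_act. lra.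
 - intros s Hs Hg. destruct (Nat.eq_dec j (ik (t + s))).
   + apply (G_step _ _ _ j). apply Hgf; lia. pose proof IN; lia. rewrite e. rewrite What_v_act. lra.
   + apply (G_step _ _ _ (j + I)); auto. nia. rewrite What_v_id; auto. lra.
Qed.

Lemma F3 t m j s1 : (j < I)%nat -> GF t m s1 (j + I) -> forall e, (e <= D)%nat -> GF t m (s1 + e) (j + (e + 1) * I).
Proof. intros Hj Hg e. induction e; intros He.
 - rewrite Nat.add_0_r. replace (j + (0 + 1) * I)%nat with (j + I)%nat by lia. auto.
 - intros s Hs. destruct s as [|s']. lia.
   apply (G_step _ _ _ (j + (e + 1) * I)). apply IHe; lia. nia.
   replace (j + (e + 1) * I)%nat with (j + (S e + 1) * I - I)%nat by nia.
   rewrite What_buf. lra. nia. nia.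
Qed.

Lemma hop t m j i s0 : (j < I)%nat -> (i < I)%nat -> E j i = true -> GF t m s0 j -> GF t m (s0 + (2 * T + D)) i.
Proof. intros Hj Hi Ee Hg. destruct (F2 t m j s0 Hj Hg) as [s1 [Hs1 Hv]].
 pose proof (F3 t m j s1 Hj Hv) as Hb.
 destruct Has as [_ [Hact Hd]]. destruct (Hact (t + s1 + D)%nat i Hi) as [a [Ha1 [Ha2 Ha3]]].
 assert (Hda : (d a j <= D)%nat) by (apply Hd; rewrite Ha3; auto).
 apply (GF_mono _ _ (S (a - t))); [|lia].
 apply x_persist; auto.
 apply (G_step _ _ _ (j + (d a j + 1) * I)). apply (Hb (d a j)); auto. lia. nia.
 replace (t + (a - t))%nat with a by lia. rewrite <- Ha3. apply What_nbr; auto. rewrite Ha3; auto.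
Qed.


Lemma crossing (R : relation nat) (P : nat -> Prop) a b : clos_trans nat R a b -> P a -> ~ P b ->
  exists x y, R x y /\ P x /\ ~ P y.
Proof. induction 1; intros Ha Hb. exists x, y; auto.
 destruct (classic (P y)). apply IHclos_trans2; auto. apply IHclos_trans1; auto. Qed.

Lemma layers t m : (m < I)%nat -> forall c, (c < I)%nat -> exists L, NoDup L /\ length L = S c /\
  (forall x, In x L -> (x < I)%nat /\ GF t m (c * (2 * T + D)) x) /\ In m L.
Proof. intros Hm0 c. induction c; intros Hcl.
 - exists (m :: nil). split. constructor. simpl; auto. constructor. split. reflexivity. split.
   intros x [<-|[]]. split; auto. apply x_persist; auto. reflexivity. simpl; auto.
 - destruct IHc as [L [HL1 [HL2 [HL3 HL4]]]]. lia.
   destruct (classic (exists i, (i < I)%nat /\ ~ In i L)) as [[i [Hi Hni]]|Hno].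
   + assert (i <> m) by (intro; subst; contradiction).
     destruct Hsc as [_ [_ Hst]]. specialize (Hst m i Hm0 Hi (not_eq_sym H)).
     destruct (crossing _ (fun x => In x L) m i Hst HL4 Hni) as [x [y [[Hx [Hy Exy]] [HxL HyL]]]].
     exists (y :: L). split. constructor; auto. split. simpl; congruence. split.
     * intros z [<-|Hz]. split; auto. rewrite Nat.mul_succ_l. apply (hop t m x); auto. apply HL3; auto.
       destruct (HL3 z Hz). split; auto. apply (GF_mono _ _ (c * (2 * T + D))); auto. nia.
     * simpl; auto.
   + exfalso. assert (incl (seq 0 I) L).
     { intros x Hx. apply in_seq in Hx. apply NNPP; intro. apply Hno. exists x. split; [lia|auto]. }
     pose proof (NoDup_incl_length (seq_NoDup I 0) H). rewrite length_seq in H0. lia.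
Qed.

Lemma arith1 I0 T0 D0 : (1 <= I0)%nat -> ((I0 - 1) * (2 * T0 + D0) + T0 + D0 = (2 * I0 - 1) * T0 + I0 * D0)%nat.
Proof. intros. destruct I0 as [|I']; [lia|]. replace (S I' - 1)%nat with I' by lia.
 replace (2 * S I' - 1)%nat with (2 * I' + 1)%nat by lia. ring. Qed.

Lemma part_b t r m : (r < (D + 2) * I)%nat -> (m < I)%nat ->
  mbar ^ ((2 * I - 1) * T + I * D) <= WhatProd I D E W ik d t ((2 * I - 1) * T + I * D - 1) r m.
Proof. intros Hr Hm0.
 set (K1 := ((2 * I - 1) * T + I * D)%nat).
 assert (HT : (1 <= T)%nat).
 { destruct Has as [_ [Hact _]]. destruct (Hact O O ltac:(lia)) as [a [? [? ?]]]. lia. }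
 assert (HK : K1 = S (K1 - 1)).
 { unfold K1. assert (1 * T <= (2 * I - 1) * T)%nat by (apply Nat.mul_le_mono_r; lia). lia. }
 pose proof (arith1 I T D HI) as Har. fold K1 in Har.
 assert (Hall : forall i, (i < I)%nat -> GF t m ((I - 1) * (2 * T + D)) i).
 { destruct (layers t m Hm0 (I - 1) ltac:(lia)) as [L [HL1 [HL2 [HL3 _]]]].
   assert (incl (seq 0 I) L). { apply NoDup_length_incl; auto. rewrite length_seq; lia.
     intros x Hx. apply in_seq. destruct (HL3 x Hx); lia. }
   intros i Hi. apply HL3. apply H. apply in_seq. lia. }
 assert (G t m K1 r).
 { pose proof (Nat.div_mod_eq r I) as Hdm. pose proof (Nat.mod_upper_bound r I ltac:(lia)) as Hmod.
   assert (Hdiv : (r / I < D + 2)%nat) by (apply Nat.div_lt_upper_bound; lia).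
   destruct (r / I)%nat as [|e'] eqn:He.
   - rewrite Nat.mul_0_r, Nat.add_0_l in Hdm. rewrite Hdm. apply (Hall (r mod I) Hmod). lia.
   - destruct (F2 t m (r mod I) _ Hmod (Hall _ Hmod)) as [s1 [Hs1 Hv]].
     pose proof (F3 t m (r mod I) s1 Hmod Hv e' ltac:(lia)) as Hb.
     assert (Hr' : r = (r mod I + (e' + 1) * I)%nat) by (rewrite Hdm at 1; ring).
     rewrite Hr'. apply Hb. lia. }
 rewrite HK in H. simpl in H. rewrite HK at 1. exact H.
Qed.

End Wh.

Lemma spec_norm_mono N B c c' : c <= c' -> spec_norm_le N B c -> spec_norm_le N B c'.
Proof. intros Hc H x. eapply Rle_trans. apply H. apply Rmult_le_compat_r; auto. unfold norm2; apply sqrt_pos. Qed.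

Theorem lemma5 (I : nat) (E : nat -> nat -> bool) (W : nat -> nat -> R)
    (mbar : R) (T D : nat) (ik : nat -> nat) (d : nat -> nat -> nat) :
  (1 <= I)%nat ->
  strongly_connected_digraph I E ->
  row_stochastic I W ->
  0 < mbar < 1 ->
  compatible I E W mbar ->
  async_model I E T D ik d ->
  let N := ((D + 2) * I)%nat in
  let K1 := ((2 * I - 1) * T + I * D)%nat in
  let eta := mbar ^ K1 in
  let rho := Rpower (1 - mbar ^ K1) (1 / INR K1) in
  (* (a) *)
  (forall k, row_stochastic N (What I D E W ik d k)) /\
  (* (b) : first I columns of \hat W^{k+K1-1:k} *)
  (forall k r m, (r < N)%nat -> (m < I)%nat ->
     eta <= WhatProd I D E W ik d k (K1 - 1) r m) /\
  (* (c) *)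
  (exists C2 : R, 0 < C2 /\
   exists psi : nat -> nat -> R,
     (forall k, stochastic_vec N (psi k)) /\
     (forall k t, (t <= k)%nat ->
        spec_norm_le N (fun r m => WhatProd I D E W ik d t (k - t) r m - psi t m)
                     (C2 * rho ^ (k - t))) /\
     (forall k i, (i < I)%nat -> eta <= psi k i)).
Proof.
 intros HI Hsc HW Hm Hc Has N K1 eta rho.
 assert (Ha : forall k, row_stochastic N (What I D E W ik d k)).
 { intros k. apply (What_rs I E W mbar T D ik d); auto. }
 assert (Hb : forall k r m, (r < N)%nat -> (m < I)%nat -> eta <= WhatProd I D E W ik d k (K1 - 1) r m).
 { intros k r m Hr Hmi. apply (part_b I E W mbar T D ik d); auto. }
 split; [exact Ha|]. split; [exact Hb|].
 set (A := What I D E W ik d).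
 assert (Hprod : forall t n r m, WhatProd I D E W ik d t n r m = Prod N A t n r m).
 { intros t n. induction n; intros r m; simpl. reflexivity. unfold matmul. apply rsum_ext. intros; rewrite IHn; reflexivity. }
 assert (HT : (1 <= T)%nat).
 { destruct Has as [_ [Hact _]]. destruct (Hact O O ltac:(lia)) as [a [? [? ?]]]. lia. }
 assert (HK : K1 = S (K1 - 1)).
 { unfold K1. assert (1 * T <= (2 * I - 1) * T)%nat by (apply Nat.mul_le_mono_r; lia). lia. }
 assert (HN : (1 <= N)%nat) by (unfold N; nia).
 assert (Heta : 0 < eta < 1).
 { unfold eta. split. apply pow_lt; lra. rewrite HK. simpl.
   pose proof (pow_le1 mbar (K1 - 1) ltac:(lra)). pose proof (pow_le mbar (K1 - 1) ltac:(lra)). nra. }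
 assert (Hcol : forall t r, (r < N)%nat -> eta <= Prod N A t (K1 - 1) r O).
 { intros t r Hr. rewrite <- Hprod. apply Hb; auto; lia. }
 destruct (psi_exists N A Ha HN (K1 - 1) eta ltac:(lra) Hcol (proj1 Heta)) as [psi [Hp1 [Hp2 Hp3]]].
 destruct (rho_facts eta K1 Heta ltac:(lia)) as [Hrho Hrb].
 exists (INR N * INR N / (1 - eta)). split.
 { assert (1 <= INR N) by (apply (le_INR 1); auto). apply Rdiv_lt_0_compat; [nra|lra]. }
 exists psi. split; [exact Hp1|]. split.
 - intros k t Hkt.
   set (n := (k - t)%nat).
   assert (He : 0 <= (1 - eta) ^ (n / K1)) by (apply pow_le; lra).
   eapply spec_norm_mono; [|apply (norm_bound N _ ((1 - eta) ^ (n / K1))); auto].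
   + specialize (Hrb n). fold rho in Hrb.
     assert (0 <= INR N * INR N) by (apply Rmult_le_pos; apply pos_INR).
     replace (INR N * INR N / (1 - eta) * rho ^ n) with (INR N * INR N * (rho ^ n / (1 - eta))) by (field; lra).
     apply Rmult_le_compat_l; auto.
   + intros r m Hr Hm'. rewrite Hprod. replace K1 with (S (K1 - 1)) by (symmetry; exact HK). apply Hp2; auto.
 - intros k i Hi. eapply Rle_trans; [|apply Hp3; unfold N; nia].
   unfold Mn. apply rmin_ge; auto. intros r Hr. rewrite <- Hprod. apply Hb; auto.
Qed.
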